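(* Let $w$ be a reduced word in $x,y$ of length $\ell$, written $w=w_\ell\cdots w_1$ with each $w_i\in\{x,x^{-1},y,y^{-1}\}$, and let $n,m\in\mathbb{N}$ and $p$ prime. For $x,y\in\mathrm{GL}_n(\mathbb{F}_p)$ and $v_{1,0},\dots,v_{m,0}\in\mathbb{F}_p^n$ define $v_{i,j}=w_j(x,y)\,v_{i,j-1}$ for $1\le j\le\ell$ (so $v_{i,j}=w^{(j)}(x,y)v_{i,0}$ with $w^{(j)}=w_j\cdots w_1$). Let $\prec$ be the lexicographic order on $\{1,\dots,m\}\times\{0,\dots,\ell\}$, let $Z_{i,j}=\mathrm{Span}\{v_{i',j'}:(i',j')\prec(i,j)\}$, and let $$S_{w,m}=\{(x,y,v_{1,0},\dots,v_{m,0})\in\mathrm{GL}_n(\mathbb{F}_p)^2\times\mathbb{F}_p^{nm}:\ \forall i,\ v_{i,0}\notin Z_{i,0}\text{ and }v_{i,\ell}=v_{i,0}\}.$$ If $n\geq2m\ell$, then $|S_{w,m}|<\ell^m p^{2n^2+m^2\ell}$. *)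

(* Defs.v *)
From HB Require Import structures.
From mathcomp Require Import all_boot all_order all_algebra.
Set Implicit Arguments. Unset Strict Implicit. Unset Printing Implicit Defensive.
Import GRing.Theory.
Local Open Scope ring_scope.

(* A letter of a word in the free group on x, y:
   (false, false) = x, (false, true) = x^-1, (true, false) = y, (true, true) = y^-1. *)
Definition letter := (bool * bool)%type.

Definition letter_mx (F : fieldType) (n : nat) (x y : 'M[F]_n) (a : letter) : 'M[F]_n :=
  let M := if a.1 then y else x in if a.2 then invmx M else M.

Definition inv_letter (a b : letter) : bool := (a.1 == b.1) && (a.2 != b.2).

(* A word w = w_l ... w_1 is stored as the sequence [:: w_1; w_2; ...; w_l]
   (w_1 acts first). It is reduced if no letter is adjacent to its inverse. *)
Definition reduced (w : seq letter) : bool :=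
  match w with
  | [::] => true
  | a :: s => path (fun a b => ~~ inv_letter a b) a s
  end.

Definition traj (F : fieldType) (n : nat) (x y : 'M[F]_n) (w : seq letter)
  (v : 'cV[F]_n) (j : nat) : 'cV[F]_n :=
  foldl (fun u a => letter_mx x y a *m u) v (take j w).

(* Z_{i,0} = Span { v_{i',j'} : (i',j') lexicographically before (i,0) }
          = Span { v_{i',j'} : i' < i, 0 <= j' <= l }. *)
Definition Zspan (F : fieldType) (n m : nat) (x y : 'M[F]_n) (w : seq letter)
  (vs : {ffun 'I_m -> 'cV[F]_n}) (i : 'I_m) : {vspace 'cV[F]_n} :=
  <<[seq traj x y w (vs k.1) k.2
     | k : 'I_m * nat <- [seq (i', j) | i' <- enum 'I_m, j <- iota 0 (size w).+1] & (nat_of_ord k.1 < nat_of_ord i)%N]>>%VS.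

Definition S_set (p n m : nat) (w : seq letter) :
  {set 'M['F_p]_n * 'M['F_p]_n * {ffun 'I_m -> 'cV['F_p]_n}} :=
  [set t : 'M['F_p]_n * 'M['F_p]_n * {ffun 'I_m -> 'cV['F_p]_n} |
     let: (x, y, vs) := t in
     [&& x \in unitmx, y \in unitmx &
       [forall i : 'I_m,
          (vs i \notin Zspan x y w vs i) && (traj x y w (vs i) (size w) == vs i)]]].

(* Main.v *)
Require Import Defs.
From HB Require Import structures.
From mathcomp Require Import all_boot all_order all_algebra all_field.
From mathcomp Require Import zify.
Set Implicit Arguments. Unset Strict Implicit. Unset Printing Implicit Defensive.
Import GRing.Theory.

Section LinAlg.
Variables (F : finFieldType) (n : nat).

Local Open Scope ring_scope.
Implicit Types (A B : 'M[F]_n) (s : seq 'cV[F]_n).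

Lemma agree_span A B s :
  {in s, forall v, A *m v = B *m v} -> forall v, v \in <<s>>%VS -> A *m v = B *m v.
Proof.
move=> H v.
pose f := linfun (mulmx (A - B) : 'cV[F]_n -> 'cV[F]_n).
have : (<<s>> <= lker f)%VS.
  apply/span_subvP => u su; rewrite memv_ker lfunE /= mulmxBl subr_eq0 H //.
move/subvP => Hs /Hs; rewrite memv_ker lfunE /= mulmxBl subr_eq0 => /eqP //.
Qed.

Lemma map_span A (L : seq ('cV[F]_n * 'cV[F]_n)) :
  {in L, forall q, A *m q.1 = q.2} ->
  forall v, v \in <<map fst L>>%VS -> A *m v \in <<map snd L>>%VS.
Proof.
move=> H v Hv.
pose f := linfun (mulmx A : 'cV[F]_n -> 'cV[F]_n).
have -> : map snd L = map f (map fst L).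
  rewrite -map_comp; apply/eq_in_map => q qL /=; by rewrite lfunE /= H.
rewrite -limg_span.
have -> : A *m v = f v by rewrite lfunE.
exact: memv_img.
Qed.

Lemma dim_cons_notin (c : 'cV[F]_n) s :
  c \notin <<s>>%VS -> (\dim <<c :: s>> = (\dim <<s>>).+1)%N.
Proof.
move=> cn; rewrite span_cons.
apply/eqP; rewrite eqn_leq; apply/andP; split.
  apply: leq_trans (dimv_add_leqif _ _) _.
  rewrite dim_vline; case: (c != 0%R) => /=; rewrite ?add0n ?add1n //.
have := dimv_leqif_sup (addvSr <[c]> <<s>>).
move/ltn_leqif => ->; rewrite subv_add subvv andbT -memvE //.
Qed.

Lemma dim_cons_le (c : 'cV[F]_n) s : (\dim <<s>> <= \dim <<c :: s>>)%N.
Proof. by rewrite span_cons dimvS // addvSr. Qed.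

Lemma dim_le_n (U : {vspace 'cV[F]_n}) : (\dim U <= n)%N.
Proof.
have := dimvS (subvf U); rewrite dimvf /dim /= muln1 //.
Qed.

Lemma card_cV : #|{: 'cV[F]_n}| = (#|F| ^ n)%N.
Proof. by rewrite card_mx muln1. Qed.

Lemma card_in_vspace (U : {vspace 'cV[F]_n}) :
  #|[pred c : 'cV[F]_n | c \in U]| = (#|F| ^ \dim U)%N.
Proof. by rewrite -card_vspace. Qed.


Lemma mx_eq_ext A B : (forall v : 'cV[F]_n, A *m v = B *m v) -> A = B.
Proof.
move=> H; apply/matrixP => i j.
have := congr1 (fun M : 'cV[F]_n => M i 0) (H (delta_mx j 0)).
by rewrite -!colE !mxE.
Qed.

Lemma card_constr (L : seq ('cV[F]_n * 'cV[F]_n)) :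
  (#|[set x : 'M[F]_n | all (fun q => x *m q.1 == q.2) L]|
     * #|F| ^ (n * \dim <<map fst L>>) <= #|F| ^ (n * n))%N.
Proof.
set X := [set x : 'M[F]_n | _].
set U := <<map fst L>>%VS.
pose C := (U^C)%VS.
pose b := vbasis C.
pose f (x : 'M[F]_n) := [ffun i : 'I_(\dim C) => x *m tnth b i].
have inj : {in X &, injective f}.
  move=> x x'; rewrite !inE => /allP Hx /allP Hx' Hf.
  apply: mx_eq_ext => v.
  have HC : forall u, u \in C -> x *m u = x' *m u.
    move=> u uC; apply: (@agree_span x x' b); last by rewrite (span_basis (vbasisP C)).
    move=> z /tnthP [i ->].
      by move/ffunP: Hf => /(_ i); rewrite !ffunE.
  have HU : forall u, u \in U -> x *m u = x' *m u.
    move=> u uU; apply: (@agree_span x x' (map fst L)) => // z /mapP [q qL ->].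
    by rewrite (eqP (Hx q qL)) (eqP (Hx' q qL)).
  have : v \in (U + C)%VS by rewrite addv_complf memvf.
  case/memv_addP => u uU [u' u'C ->].
  by rewrite !mulmxDr HU // HC.
have le1 : (#|X| <= (#|F| ^ n) ^ (n - \dim U))%N.
  rewrite -(card_in_imset inj).
  apply: leq_trans (max_card _) _.
  rewrite card_ffun card_ord card_cV /C dimv_compl dimvf /dim /= muln1 //.
apply: leq_trans (leq_mul le1 (leqnn _)) _.
rewrite -expnM -expnD -mulnDr subnK ?dim_le_n //.
Qed.

End LinAlg.

Section Model.
Variables (F : finFieldType) (n : nat).
Local Notation V := 'cV[F]_n.
Local Notation M := 'M[F]_n.
Local Open Scope ring_scope.

Definition con := (bool * (V * V))%type.
Definition cmat (xy : M * M) (b : bool) : M := if b then xy.2 else xy.1.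
Definition G (Cs : seq con) : {set M * M} :=
  [set xy | [&& xy.1 \in unitmx, xy.2 \in unitmx &
            all (fun q : con => cmat xy q.1 *m q.2.1 == q.2.2) Cs]].
Definition cls (b : bool) (Cs : seq con) : seq (V * V) :=
  [seq q.2 | q <- Cs & q.1 == b].
Definition dimK (Cs : seq con) : nat :=
  (\dim <<map fst (cls false Cs)>> + \dim <<map fst (cls true Cs)>>)%N.
Definition step (a : letter) (u c : V) : con :=
  if a.2 then (a.1, (c, u)) else (a.1, (u, c)).
Definition known (Cs : seq con) (a : letter) : {vspace V} :=
  if a.2 then <<map snd (cls a.1 Cs)>>%VS else <<map fst (cls a.1 Cs)>>%VS.

Lemma G_cls xy Cs b : xy \in G Cs -> {in cls b Cs, forall q, cmat xy b *m q.1 = q.2}.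
Proof.
rewrite inE => /and3P [_ _ /allP H] q /mapP [q' ]; rewrite mem_filter => /andP [/eqP <- qC] ->.
exact/eqP/H.
Qed.

Lemma G_unit xy Cs b : xy \in G Cs -> cmat xy b \in unitmx.
Proof. by rewrite inE => /and3P [H1 H2 _]; case: b. Qed.

Lemma card_G Cs : (#|G Cs| * #|F| ^ (n * dimK Cs) <= #|F| ^ (2 * n ^ 2))%N.
Proof.
pose Gc b := [set x : M | all (fun q => x *m q.1 == q.2) (cls b Cs)].
have sub : G Cs \subset setX (Gc false) (Gc true).
  apply/subsetP => xy xyG; rewrite inE !inE.
  apply/andP; split; apply/allP => q qc; apply/eqP.
    exact: (G_cls xyG qc).
  exact: (G_cls xyG qc).
have := subset_leq_card sub; rewrite cardsX => le.
apply: leq_trans (leq_mul le (leqnn _)) _.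
rewrite /dimK mulnDr expnD mulnACA.
have -> : (2 * n ^ 2 = n * n + n * n)%N by rewrite mul2n -addnn.
rewrite expnD; apply: leq_mul; exact: card_constr.
Qed.

Lemma G_step xy a u c Cs :
  (xy \in G (step a u c :: Cs)) = (xy \in G Cs) && (letter_mx xy.1 xy.2 a *m u == c).
Proof.
rewrite !inE /step /letter_mx /cmat.
case: a => [a1 a2] /=.
case: (boolP (xy.1 \in unitmx)) => U1 //=.
case: (boolP (xy.2 \in unitmx)) => U2 //=.
have HU : (if a1 then xy.2 else xy.1) \in unitmx by case: a1.
case: a2 => /=; rewrite andbC //.
congr (_ && _).
apply/eqP/eqP => [<-|<-]; [by rewrite mulKmx | by rewrite mulKVmx].
Qed.

Lemma step1 a u c : (step a u c).1 = a.1.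
Proof. by rewrite /step; case: a.2. Qed.

Lemma cls_step a u c Cs b :
  cls b (step a u c :: Cs) =
  if a.1 == b then (step a u c).2 :: cls b Cs else cls b Cs.
Proof. by rewrite /cls /= step1; case: (a.1 == b). Qed.

Lemma dimK_mono a u c Cs : (dimK Cs <= dimK (step a u c :: Cs))%N.
Proof.
rewrite /dimK !cls_step; case: a => [a1 a2]; case: a1 => /=;
  apply: leq_add => //; exact: dim_cons_le.
Qed.

Lemma dimK_free a u c Cs xy :
  u \notin known Cs a -> xy \in G (step a u c :: Cs) ->
  dimK (step a u c :: Cs) = (dimK Cs).+1.
Proof.
move=> Hu xyG.
have xyG0 : xy \in G Cs by move: xyG; rewrite G_step => /andP [].
have Hc : (step a u c).2.1 \notin <<map fst (cls a.1 Cs)>>%VS.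
  move: Hu; rewrite /known /step; case: a xyG => [a1 a2] xyG /=.
  case: a2 xyG => //= xyG Hu.
  apply/negP => Hin; move/negP: Hu; apply.
  have := map_span (G_cls xyG0 (b:=a1)) Hin.
  move: xyG; rewrite G_step /letter_mx /cmat /= => /andP [_ /eqP Hl].
  have HU := G_unit a1 xyG0.
  rewrite /cmat in HU *.
  by rewrite -Hl mulKVmx.
move: Hc; rewrite /dimK !cls_step; case: a Hu xyG => [a1 a2] _ _; case: a1 => /= Hc.
  by rewrite (dim_cons_notin Hc) addnS.
by rewrite (dim_cons_notin Hc) addSn.
Qed.

Lemma forced_agree a u Cs xy xy' :
  u \in known Cs a -> xy \in G Cs -> xy' \in G Cs ->
  letter_mx xy.1 xy.2 a *m u = letter_mx xy'.1 xy'.2 a *m u.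
Proof.
move=> Hu G1 G2.
have H1 := G_cls G1 (b := a.1); have H2 := G_cls G2 (b := a.1).
have U1 := G_unit a.1 G1; have U2 := G_unit a.1 G2.
move: Hu; rewrite /known /letter_mx.
have -> : (if a.1 then xy.2 else xy.1) = cmat xy a.1 by [].
have -> : (if a.1 then xy'.2 else xy'.1) = cmat xy' a.1 by [].
case: a.2 => Hu.
  apply: agree_span Hu => z /mapP [q qc ->].
  have e1 : invmx (cmat xy a.1) *m q.2 = q.1 by rewrite -(H1 q qc) mulKmx.
  have e2 : invmx (cmat xy' a.1) *m q.2 = q.1 by rewrite -(H2 q qc) mulKmx.
  by rewrite e1 e2.
apply: agree_span Hu => z /mapP [q qc ->].
by rewrite (H1 q qc) (H2 q qc).
Qed.

End Model.

Section Count.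
Variables (F : finFieldType) (n : nat) (w : seq letter).
Local Notation V := 'cV[F]_n.
Local Notation M := 'M[F]_n.
Local Open Scope ring_scope.

Definition T (xy : M * M) ws (u : V) : seq V :=
  [seq traj xy.1 xy.2 ws u j | j <- iota 1 (size ws)].
Definition run (xy : M * M) ws (u : V) : V := traj xy.1 xy.2 ws u (size ws).
Definition lm (xy : M * M) a (u : V) : V := letter_mx xy.1 xy.2 a *m u.

Definition N k (xy : M * M) (U : {vspace V}) : nat :=
  #|[set vs : {ffun 'I_k -> V} | [forall i, (vs i \notin (U + Zspan xy.1 xy.2 w vs i)%VS)
        && (run xy w (vs i) == vs i)]]|.
Definition FF Cs (U : {vspace V}) k : nat := (\sum_(xy in G Cs) N k xy U)%N.
Definition WW Cs (U : {vspace V}) (u : V) ws (t : V) k : nat :=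
  (\sum_(xy in G Cs | run xy ws u == t) N k xy (U + <<T xy ws u>>)%VS)%N.

Lemma traj_cons x y a ws (u : V) j :
  traj x y (a :: ws) u j.+1 = traj x y ws (letter_mx x y a *m u) j.
Proof. by []. Qed.

Lemma traj0 x y ws (u : V) : traj x y ws u 0 = u.
Proof. by rewrite /traj take0. Qed.

Lemma T_cons xy a ws u : T xy (a :: ws) u = lm xy a u :: T xy ws (lm xy a u).
Proof.
rewrite /T /= traj_cons traj0; congr (_ :: _).
rewrite -[2%N]/(1 + 1)%N iotaDl -map_comp; apply: eq_map => j /=.
by rewrite add1n traj_cons.
Qed.

Lemma run_cons xy a ws u : run xy (a :: ws) u = run xy ws (lm xy a u).
Proof. by rewrite /run /= traj_cons. Qed.

Lemma W_cons Cs U u a ws t k :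
  WW Cs U u (a :: ws) t k =
  (\sum_c WW (step a u c :: Cs) (U + <[c]>)%VS c ws t k)%N.
Proof.
rewrite /WW (partition_big (fun xy => lm xy a u) xpredT) //=.
apply: eq_bigr => c _.
apply: eq_big => [xy|xy /andP [/andP [_ _] /eqP Hc]].
  rewrite G_step run_cons -/(lm xy a u).
  by case: (lm xy a u =P c) => [->|]; rewrite ?andbT ?andbF.
by rewrite T_cons Hc span_cons addvA.
Qed.

Lemma W_nil Cs U u t k : WW Cs U u [::] t k = ((u == t) * FF Cs U k)%N.
Proof.
rewrite /WW /FF /run /T /= span_nil addv0.
under eq_bigl => xy do rewrite traj0.
case: eqP => _.
  by rewrite mul1n; apply: eq_bigl => xy; rewrite andbT.
by rewrite mul0n big_pred0 // => xy; rewrite andbF.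
Qed.


Definition fcons k (v : V) (vs : {ffun 'I_k -> V}) : {ffun 'I_k.+1 -> V} :=
  [ffun i => if unlift ord0 i is Some j then vs j else v].

Lemma fcons0 k v (vs : {ffun 'I_k -> V}) : fcons v vs ord0 = v.
Proof. by rewrite ffunE unlift_none. Qed.

Lemma fconsS k v (vs : {ffun 'I_k -> V}) j : fcons v vs (lift ord0 j) = vs j.
Proof. by rewrite ffunE liftK. Qed.

Lemma card_fcons k (P : pred {ffun 'I_k.+1 -> V}) :
  #|[set vs | P vs]| = (\sum_v #|[set vs' | P (fcons v vs')]|)%N.
Proof.
have E : forall (X : finType) (Q : pred X), #|[set x | Q x]| = (\sum_(x | Q x) 1)%N.
  by move=> X Q; rewrite -sum1_card; apply: eq_bigl => x; rewrite inE.
rewrite (E _ P).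
rewrite [RHS](eq_bigr (fun v => \sum_(vs' | P (fcons v vs')) 1)%N); last first.
  by move=> v _; rewrite (E _ (fun vs' => P (fcons v vs'))).
rewrite pair_big_dep /=.
pose h (pr : V * {ffun 'I_k -> V}) := fcons pr.1 pr.2.
pose g (vs : {ffun 'I_k.+1 -> V}) := (vs ord0, [ffun j => vs (lift ord0 j)]).
rewrite (reindex h) /=.
  by apply: eq_bigl => pr.
apply: onW_bij; exists g.
  move=> [v vs]; rewrite /g /h /= fcons0; congr (_, _).
  by apply/ffunP => j; rewrite ffunE fconsS.
move=> vs; apply/ffunP => i; rewrite /h /g /= ffunE.
by case: (unliftP ord0 i) => [j ->|->] //; rewrite ffunE.
Qed.

Lemma forall_ordS k (Q : pred 'I_k.+1) :
  [forall i, Q i] = Q ord0 && [forall j : 'I_k, Q (lift ord0 j)].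
Proof.
apply/forallP/andP => [H | [H0 /forallP H] i].
  by split; [apply: H | apply/forallP => j; apply: H].
by case: (unliftP ord0 i) => [j ->|->].
Qed.

Definition tf x y (u : V) : seq V := [seq traj x y w u j | j <- iota 0 (size w).+1].

Definition Zl k x y (vs : {ffun 'I_k -> V}) (i : 'I_k) : seq V :=
  [seq traj x y w (vs kk.1) kk.2
     | kk : 'I_k * nat <- [seq (i', j) | i' <- enum 'I_k, j <- iota 0 (size w).+1]
     & (nat_of_ord kk.1 < nat_of_ord i)%N].

Lemma ZspanE k x y (vs : {ffun 'I_k -> V}) i : Zspan x y w vs i = <<Zl x y vs i>>%VS.
Proof. by []. Qed.

Lemma memZl k x y (vs : {ffun 'I_k -> V}) i z :
  (z \in Zl x y vs i) = [exists i' : 'I_k, (i' < i)%N && (z \in tf x y (vs i'))].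
Proof.
apply/idP/existsP.
  case/mapP => kk; rewrite mem_filter => /andP [lt /flatten_mapP [i' _ /mapP [j jI E]]] ->.
  rewrite E /= in lt *; exists i'; rewrite lt /=; exact: map_f.
case=> i' /andP [lt /mapP [j jI ->]]; apply/mapP; exists (i', j) => //.
rewrite mem_filter; apply/andP; split; first exact: lt.
apply/flatten_mapP; exists i'; first by rewrite mem_enum.
exact: (map_f (fun j0 => (i', j0)) jI).
Qed.

Lemma Zspan_fcons0 k x y v (vs : {ffun 'I_k -> V}) :
  Zspan x y w (fcons v vs) ord0 = 0%VS.
Proof.
rewrite ZspanE -span_nil; apply: eq_span => z; rewrite memZl in_nil.
by apply/existsP => [[i' /andP []]].
Qed.

Lemma Zspan_fconsS k x y v (vs : {ffun 'I_k -> V}) j :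
  Zspan x y w (fcons v vs) (lift ord0 j) = (<<tf x y v>> + Zspan x y w vs j)%VS.
Proof.
rewrite !ZspanE -span_cat; apply: eq_span => z; rewrite mem_cat !memZl.
apply/existsP/orP => [[i' /andP [lt Hz]]|].
  move: lt Hz; case: (unliftP ord0 i') => [i'' ->|->]; rewrite ?fconsS ?fcons0.
    by rewrite !lift0 ltnS => lt Hz; right; apply/existsP; exists i''; rewrite lt.
  by move=> _ Hz; left.
case=> [Hz | /existsP [i'' /andP [lt Hz]]].
  by exists ord0; rewrite fcons0 Hz lift0 andbT.
by exists (lift ord0 i''); rewrite fconsS Hz !lift0 ltnS lt.
Qed.

Lemma tf_T xy u : tf xy.1 xy.2 u = u :: T xy w u.
Proof. by rewrite /tf /T /= traj0. Qed.

Lemma N_rec k xy U :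
  N k.+1 xy U = (\sum_(v | v \notin U)
     (if run xy w v == v then N k xy ((U + <[v]>) + <<T xy w v>>)%VS else 0))%N.
Proof.
rewrite /N card_fcons [RHS]big_mkcond /=; apply: eq_bigr => v _.
set U' := ((U + <[v]>) + <<T xy w v>>)%VS.
have -> : [set vs' : {ffun 'I_k -> V} | [forall i, (fcons v vs' i \notin
             (U + Zspan xy.1 xy.2 w (fcons v vs') i)%VS)
          && (run xy w (fcons v vs' i) == fcons v vs' i)]] =
   if (v \notin U) && (run xy w v == v) then
     [set vs' : {ffun 'I_k -> V} | [forall i, (vs' i \notin (U' + Zspan xy.1 xy.2 w vs' i)%VS)
        && (run xy w (vs' i) == vs' i)]] else set0.
  apply/setP => vs'; rewrite !inE forall_ordS fcons0 Zspan_fcons0 addv0.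
  case: (v \notin U) (run xy w v == v) => [] [] //=; rewrite ?inE //.
  apply: eq_forallb => j; rewrite fconsS Zspan_fconsS.
  by rewrite /U' tf_T span_cons !addvA.
by case: (v \notin U) (run xy w v == v) => [] [] //=; rewrite cards0.
Qed.

Lemma F_rec Cs U k :
  FF Cs U k.+1 = (\sum_(v | v \notin U) WW Cs (U + <[v]>)%VS v w v k)%N.
Proof.
rewrite /FF /WW; under eq_bigr => xy _ do rewrite N_rec.
rewrite exchange_big /=; apply: eq_bigr => v _.
by rewrite big_mkcondr.
Qed.

End Count.

Section Bounds.
Variables (F : finFieldType) (n : nat) (w : seq letter).
Local Notation V := 'cV[F]_n.
Local Notation M := 'M[F]_n.
Local Notation q := #|F|.

Definition inv (Cs : seq (con F n)) (U : {vspace V}) :=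
  all (fun c : con F n => (c.2.1 \in U) && (c.2.2 \in U)) Cs.

Fixpoint Phi (r s : nat) : nat := if r is r'.+1 then q ^ s + Phi r' s.+1 else 1.
Fixpoint R (k s : nat) : nat :=
  if k is k'.+1 then Phi (size w).-1 s.+1 * R k' (s.+1 + size w) else 1.

Local Notation K Cs := (q ^ (n * dimK Cs)).
Local Notation B := (q ^ (2 * n ^ 2)).

Lemma q_gt0 : 0 < q.
Proof. by apply/card_gt0P; exists 0%R. Qed.

Lemma inv_mono Cs U U' : inv Cs U -> (U <= U')%VS -> inv Cs U'.
Proof.
move=> /allP H /subvP S; apply/allP => c cC; case/andP: (H c cC) => h1 h2.
by rewrite !S.
Qed.

Lemma inv_step Cs U a u c : inv Cs U -> u \in U ->
  inv (step a u c :: Cs) (U + <[c]>)%VS.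
Proof.
move=> H uU; rewrite /inv /=; apply/andP; split; last first.
  by apply: inv_mono H _; rewrite addvSl.
have uU' : u \in (U + <[c]>)%VS by rewrite (subvP (addvSl _ _)).
have cU' : c \in (U + <[c]>)%VS by rewrite (subvP (addvSr _ _)) // memv_line.
by rewrite /step; case: a.2; rewrite /= ?uU' ?cU'.
Qed.

Lemma inv_cls Cs U b : inv Cs U -> {in cls b Cs, forall pr, (pr.1 \in U) && (pr.2 \in U)}.
Proof.
move=> /allP H pr /mapP [c]; rewrite mem_filter => /andP [_ cC] ->; exact: H.
Qed.

Lemma known_sub Cs U a : inv Cs U -> (known Cs a <= U)%VS.
Proof.
move=> H; have Hc := inv_cls (b:=a.1) H.
rewrite /known; case: a.2; apply/span_subvP => z /mapP [pr prC ->];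
  by case/andP: (Hc pr prC).
Qed.

Lemma known_step Cs U a b u c : inv Cs U -> u \in U -> ~~ inv_letter a b ->
  (known (step a u c :: Cs) b <= U)%VS.
Proof.
move=> H uU nab; have Hc := inv_cls (b:=b.1) H.
rewrite /known cls_step.
case: (boolP (a.1 == b.1)) => E; last first.
  by case: b.2; apply/span_subvP => z /mapP [pr prC ->]; case/andP: (Hc pr prC).
move: nab; rewrite /inv_letter E /= negbK => /eqP E2.
rewrite /step E2; case: b.2 => /=; apply/span_subvP => z; rewrite inE =>
  /orP [/eqP -> // | /mapP [pr prC ->]]; by case/andP: (Hc pr prC).
Qed.

Lemma W0 (Cs : seq (con F n)) U u ws t k : (forall xy, xy \notin G Cs) -> WW w Cs U u ws t k = 0.
Proof. by move=> H; rewrite /WW big1 // => xy /andP [xyG _]; move: (H xy); rewrite xyG. Qed.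

Lemma free_mul (Cs : seq (con F n)) U a u c ws t k : u \notin known Cs a ->
  WW w (step a u c :: Cs) U c ws t k * K Cs * q ^ n <=
  WW w (step a u c :: Cs) U c ws t k * K (step a u c :: Cs).
Proof.
move=> Hu.
case: (pickP (mem (G (step a u c :: Cs)))) => [xy xyG | none]; last first.
  by rewrite W0 // => xy; apply/negbT; exact: none.
by rewrite (dimK_free Hu xyG) mulnS expnD -mulnA [q ^ (n * _) * _]mulnC.
Qed.

Lemma card_cVF : #|{: V}| = q ^ n.
Proof. exact: card_cV. Qed.

Lemma sum_le_card (P : pred V) (f : V -> nat) X :
  (forall c, P c -> f c <= X) -> \sum_(c | P c) f c <= #|P| * X.
Proof.
move=> H; rewrite -sum_nat_const; apply: leq_sum => c; exact: H.
Qed.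

Lemma dim_add_line (U : {vspace V}) c s : \dim U <= s -> \dim (U + <[c]>)%VS <= s.+1.
Proof.
move=> dU; apply: leq_trans (dimv_add_leqif _ _) _.
rewrite dim_vline; case: (c != 0%R) => /=; lia.
Qed.

Definition Fbound k := forall (Cs : seq (con F n)) U s, inv Cs U -> \dim U <= s ->
  FF w Cs U k * K Cs <= B * R k s.

Lemma WB k : Fbound k -> forall ws (Cs : seq (con F n)) U u t s,
  inv Cs U -> u \in U -> \dim U <= s ->
  WW w Cs U u ws t k * K Cs <= B * R k (s + size ws).
Proof.
move=> Fb; elim=> [|a ws IH] Cs U u t s HI uU dU.
  rewrite W_nil addn0; apply: leq_trans (Fb Cs U s HI dU).
  by rewrite -mulnA; case: (u == t); rewrite ?mul1n ?mul0n.
rewrite W_cons.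
have IHc c : WW w (step a u c :: Cs) (U + <[c]>)%VS c ws t k * K (step a u c :: Cs)
    <= B * R k (s + size (a :: ws)).
  rewrite /= -addSnnS; apply: IH.
  - exact: inv_step.
  - by rewrite (subvP (addvSr _ _)) // memv_line.
  - exact: dim_add_line.
case: (boolP (u \in known Cs a)) => Hk.
  case: (pickP (mem (G Cs))) => [xy0 G0 | none].
    rewrite (bigD1 (lm xy0 a u)) //= big1 ?addn0.
      apply: leq_trans (IHc (lm xy0 a u)); rewrite leq_mul2l; apply/orP; right.
      by rewrite leq_pexp2l ?q_gt0 // leq_mul2l dimK_mono orbT.
    move=> c ne; apply: W0 => xy; apply/negP; rewrite G_step => /andP [G1 /eqP E].
    by move/eqP: ne; apply; rewrite -E; apply: (forced_agree Hk G1 G0).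
  rewrite big1 // => c _; apply: W0 => xy; rewrite G_step.
  by have := none xy; rewrite /= => ->.
rewrite -(@leq_pmul2r (q ^ n)) ?expn_gt0 ?q_gt0 //.
rewrite !big_distrl /=.
apply: (@leq_trans (\sum_(c : V) WW w (step a u c :: Cs) (U + <[c]>)%VS c ws t k
    * K (step a u c :: Cs))).
  by apply: leq_sum => c _; apply: free_mul.
apply: (@leq_trans (\sum_(c : V) (B * R k (s + size (a :: ws))))).
  by apply: leq_sum => c _; apply: IHc.
by rewrite sum_nat_const card_cVF mulnC.
Qed.

Lemma WA k : Fbound k -> forall ws a (Cs : seq (con F n)) U u t s,
  inv Cs U -> u \in U -> \dim U <= s ->
  path (fun a b => ~~ inv_letter a b) a ws -> u \notin known Cs a ->
  WW w Cs U u (a :: ws) t k * K Cs * q ^ n <= B * R k (s + size (a :: ws)) * Phi (size ws) s.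
Proof.
move=> Fb; elim=> [|b ws IH] a Cs U u t s HI uU dU Hp Hk.
  rewrite W_cons big_distrl big_distrl (bigD1 t) //= big1 ?addn0; last first.
    by move=> c ne; rewrite W_nil (negbTE ne) !mul0n.
  apply: (@leq_trans (WW w (step a u t :: Cs) (U + <[t]>)%VS t [::] t k *
     K (step a u t :: Cs))); first exact: free_mul.
  rewrite muln1 addn1 -[s.+1]addn0.
  apply: (WB Fb).
  - exact: inv_step.
  - by rewrite (subvP (addvSr _ _)) // memv_line.
  - exact: dim_add_line.
move: Hp => /= /andP [nab Hp].
rewrite W_cons big_distrl big_distrl (bigID (fun c => c \in U)) /= mulnDr.
have EE : s + size [:: a, b & ws] = s.+1 + size (b :: ws) by rewrite /= addSnnS.
apply: leq_add.
  apply: (@leq_trans (\sum_(c | c \in U) (B * R k (s + size [:: a, b & ws])))).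
    apply: leq_sum => c cU.
    apply: (@leq_trans (WW w (step a u c :: Cs) (U + <[c]>)%VS c (b :: ws) t k *
      K (step a u c :: Cs))); first exact: free_mul.
    rewrite EE; apply: WB => //.
    - exact: inv_step.
    - by rewrite (subvP (addvSr _ _)) // memv_line.
    - exact: dim_add_line.
  rewrite sum_nat_const card_in_vspace mulnC leq_mul2l; apply/orP; right.
  by rewrite leq_pexp2l ?q_gt0.
rewrite -(@leq_pmul2r (q ^ n)) ?expn_gt0 ?q_gt0 // big_distrl /=.
apply: (@leq_trans (\sum_(c | c \notin U) (B * R k (s + size [:: a, b & ws]) *
   Phi (size ws) s.+1))).
  apply: leq_sum => c cU.
  apply: (@leq_trans (WW w (step a u c :: Cs) (U + <[c]>)%VS c (b :: ws) t k *
     K (step a u c :: Cs) * q ^ n)).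
    by rewrite leq_mul2r; apply/orP; right; apply: free_mul.
  rewrite EE; apply: IH => //.
  - exact: inv_step.
  - by rewrite (subvP (addvSr _ _)) // memv_line.
  - exact: dim_add_line.
  - apply/negP => /(subvP (known_step c HI uU nab)); exact/negP.
rewrite sum_nat_const mulnC leq_mul2l; apply/orP; right.
by apply: leq_trans (max_card _) _; rewrite card_cVF.
Qed.

Lemma N0 (xy : M * M) U : N w 0 xy U = 1.
Proof.
rewrite /N; set S := [set _ | _].
have -> : S = setT by apply/setP => vs; rewrite !inE; apply/forallP => [[]].
by rewrite cardsT card_ffun card_ord expn0.
Qed.

Lemma FB : reduced w -> 0 < size w -> forall k, Fbound k.
Proof.
move=> Hred Hw; elim=> [|k IHk] Cs U s HI dU.
  rewrite /FF; under eq_bigr => xy _ do rewrite N0.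
  by rewrite sum1_card /= muln1; apply: card_G.
have [a [ws E]] : exists a ws, w = a :: ws.
  by move: Hw; case: w => // a ws _; exists a, ws.
rewrite F_rec.
rewrite -(@leq_pmul2r (q ^ n)) ?expn_gt0 ?q_gt0 // !big_distrl /=.
apply: (@leq_trans (\sum_(v | v \notin U) (B * R k (s.+1 + size w) * Phi (size ws) s.+1))).
  apply: leq_sum => v vU.
  have := @WA k IHk ws a Cs (U + <[v]>)%VS v v s.+1.
  rewrite -E; apply.
  - by apply: inv_mono HI _; rewrite addvSl.
  - by rewrite (subvP (addvSr _ _)) // memv_line.
  - exact: dim_add_line.
  - by move: Hred; rewrite E.
  - apply/negP => /(subvP (known_sub a HI)); exact/negP.
rewrite sum_nat_const mulnC.
have Es : (size w).-1 = size ws by rewrite E.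
rewrite /= Es; apply: leq_mul.
  by rewrite -mulnA [Phi _ _ * _]mulnC.
by apply: leq_trans (max_card _) _; rewrite card_cVF.
Qed.

Lemma Phi_le r s : Phi r s.+1 <= r.+1 * q ^ (s + r).
Proof.
elim: r s => [|r IH] s /=.
  by rewrite mul1n addn0 expn_gt0 q_gt0.
have h1 := IH s.+1.
have h2 : q ^ s.+1 <= q ^ (s + r.+1) by rewrite leq_pexp2l ?q_gt0 // addnS ltnS leq_addr.
rewrite addSnnS in h1.
set X := q ^ (s + r.+1) in h1 h2 *.
clearbody X; change (q ^ s.+1 + Phi r s.+2 <= r.+2 * X).
move: h1 h2; generalize (q ^ s.+1) (Phi r s.+2) => a0 b0; nia.
Qed.

Fixpoint E (l s k : nat) : nat := if k is k'.+1 then s + l + E l (s + l.+2) k' else 0.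

Lemma E_closed l s k :
  2 * E l s k + k * (l + 2) = 2 * k * s + 2 * k * l + k * k * (l + 2).
Proof.
elim: k s => [|k IH] s /=; first by rewrite !muln0 !mul0n.
have := IH (s + l.+2); nia.
Qed.

Lemma R_le k s : 0 < size w -> R k s <= size w ^ k * q ^ (E (size w).-1 s k).
Proof.
move=> Hw; elim: k s => [|k IH] s /=; first by rewrite expn0 mul1n.
have h1 := Phi_le (size w).-1 s.
have h2 := IH (s.+1 + size w).
have e : s.+1 + size w = s + (size w).-1.+2.
  by move: Hw; case: (size w) => // l _ /=; rewrite addSnnS.
rewrite e in h2 *.
have h3 := leq_mul h1 h2.
apply: (leq_trans h3).
by rewrite prednK // expnS (expnD q (s + (size w).-1)) mulnACA.
Qed.

End Bounds.

Lemma E_lt l m : 0 < m -> E l 0 m < m ^ 2 * l.+1.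
Proof.
move=> Hm; have := E_closed l 0 m; rewrite muln0 add0n => h.
have : 2 * E l 0 m < 2 * (m ^ 2 * l.+1); last by rewrite ltn_pmul2l.
rewrite expnS expn1; nia.
Qed.

Lemma card_S p n m w :
  #|S_set p n m w| = FF w (F := 'F_p) (n := n) [::] 0%VS m.
Proof.
rewrite -sum1_card /FF.
rewrite (eq_bigl (fun t => (true && ((t.1, t.2) \in S_set p n m w)))); last first.
  by case=> [xy vs].
rewrite -(pair_big_dep xpredT (fun xy vs => (xy, vs) \in S_set p n m w) (fun _ _ => 1)) /=.
rewrite [RHS]big_mkcond /=; apply: eq_bigr => [[x y]] _.
rewrite sum1_card /N.
case: (boolP ((x, y) \in G [::])) => HG.
  apply: eq_card => vs; rewrite unfold_in /= !inE /=.
  move: HG; rewrite inE /= andbT => /andP [U1 U2].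
  rewrite -[LHS]/((x, y, vs) \in S_set p n m w).
  rewrite inE /= U1 U2 /=.
  by apply: eq_forallb => i; rewrite add0v.
move: HG; rewrite inE /= andbT => HG.
apply: eq_card0 => vs; rewrite unfold_in /= !inE /=.
change (((x, y, vs) \in S_set p n m w) = false).
rewrite inE /=.
by apply/negP => /and3P [U1 U2 _]; move: HG; rewrite U1 U2.
Qed.

Theorem proposition3p13 (w : seq letter) (n m p : nat) :
  prime p -> reduced w -> (0 < size w)%N -> (0 < m)%N ->
  (2 * m * size w <= n)%N ->
  (#|S_set p n m w| < (size w) ^ m * p ^ (2 * n ^ 2 + m ^ 2 * size w))%N.
Proof.
move=> pp Hred Hw Hm _.
rewrite card_S.
have qe : #|'F_p| = p := card_Fp pp.
have p1 : 1 < p := prime_gt1 pp.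
have H := @FB 'F_p n w Hred Hw m [::] 0%VS 0 isT (eq_leq (dimv0 _)).
have dK : dimK ([::] : seq (con 'F_p n)) = 0.
  by rewrite /dimK /cls /= span_nil dimv0.
rewrite dK muln0 expn0 muln1 qe in H.
have HR := @R_le 'F_p w m 0 Hw.
rewrite qe in HR.
have HE := E_lt (size w).-1 Hm.
rewrite prednK // in HE.
apply: (leq_ltn_trans H).
rewrite expnD mulnCA ltn_pmul2l ?expn_gt0 ?(ltnW p1) //.
apply: (leq_ltn_trans HR).
by rewrite ltn_pmul2l ?expn_gt0 ?Hw // ltn_exp2l.
Qed.
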